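(* Let $a\ge0$ be real, let $A:=\frac{a+i}{a-i}$, and suppose $A$ is not a root of unity and $\liminf_{m\to\infty}|A^m-1|^{1/m}=0$. Let $0<R<\infty$. Then there exists $f\in A(B_R)$ such that the unique formal power series solution $u$ of the Goursat problem $\Delta u=f$, $y(x-ay)\mid u$ (i.e. $u=y(x-ay)q$ for a formal power series $q$) does not converge in any neighborhood of the origin. Specifically, one can take $f=\sum_{m\ge0}R^{-m}\bar z^m$ with $\bar z=x-iy$.
   Context: $\Delta$ is the Laplace operator on $\mathbb R^2$. $B_R=\{(x,y): x^2+y^2<R^2\}$ and $A(B_R)$ denotes the algebra of all $C^\infty$ functions $f:B_R\to\mathbb C$ such that for every compact $K\subset B_R$ the homogeneous Taylor series $\sum_m f_m$ of $f$ at $0$ converges absolutely and uniformly to $f$ on $K$. When $A$ is not a root of unity, the formal problem has a unique formal power series solution. *)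

(* Defs.v *)
From Stdlib Require Import Reals.
From Coquelicot Require Import Coquelicot.
Open Scope R_scope.

Notation CC := Complex.C.

(* A formal power series in the real variables x, y with complex
   coefficients: u i j is the coefficient of x^i y^j. *)
Definition fps := nat -> nat -> CC.

(* formal Laplacian: coefficient of x^i y^j in u_xx + u_yy *)
Definition flap (u : fps) : fps := fun i j =>
  (RtoC (INR ((i + 2) * (i + 1))) * u (i + 2)%nat j
   + RtoC (INR ((j + 2) * (j + 1))) * u i (j + 2)%nat)%C.

Definition mul_yxay (a : R) (q : fps) : fps := fun i j =>
  ((match i, j with S i', S j' => q i' j' | _, _ => 0%C end)
   - RtoC a * (match j with S (S j') => q i j' | _ => 0%C end))%C.

Definition goursat_sol (a : R) (f u : fps) : Prop :=
  (forall i j, flap u i j = f i j) /\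
  exists q : fps, forall i j, u i j = mul_yxay a q i j.

Definition hom (u : fps) (m : nat) (x y : R) : CC :=
  sum_n (fun i => (u i (m - i)%nat * pow_n (RtoC x) i
                   * pow_n (RtoC y) (m - i)%nat)%C) m.

Definition converges_near0 (u : fps) : Prop :=
  exists eps : R, 0 < eps /\
    forall x y : R, x ^ 2 + y ^ 2 < eps ^ 2 -> ex_series (fun m => hom u m x y).

(* Series part of membership in A(B_R): the homogeneous Taylor series
   converges absolutely and uniformly on every closed ball of radius r < R
   (Weierstrass M-test form; every compact K of B_R lies in such a ball). *)
Definition hom_series_unif_on_ball (Rr : R) (u : fps) : Prop :=
  forall r : R, 0 < r < Rr ->
    exists M : nat -> R, ex_series M /\
      forall m x y, x ^ 2 + y ^ 2 <= r ^ 2 -> Cmod (hom u m x y) <= M m.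

Definition Aof (a : R) : CC := ((RtoC a + Ci) / (RtoC a - Ci))%C.

Definition root_of_unity (z : CC) : Prop :=
  exists n : nat, (0 < n)%nat /\ pow_n z n = RtoC 1.

(* f = sum_m R^{-m} (x - i y)^m ; coefficient of x^i y^j is
   R^{-(i+j)} * binom(i+j, i) * (-i)^j  (binomial expansion) *)
Definition fcoef (Rr : R) : fps := fun i j =>
  (RtoC (/ Rr ^ (i + j) * Binomial.C (i + j) i) * pow_n (- Ci)%C j)%C.

(* Main.v *)
Require Import Defs.
From Stdlib Require Import Reals Lia Lra Factorial ZArith ClassicalEpsilon.
From Coquelicot Require Import Coquelicot.
Open Scope R_scope.

Ltac cring := match goal with |- ?a = ?b => change (@eq CC a b); ring end.



Lemma pow_n_Cpow (c : CC) n : pow_n c n = (c ^ n)%C.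
Proof. induction n; simpl; auto; rewrite IHn; reflexivity. Qed.

Lemma sum_SC (a : nat -> CC) n : sum_n a (S n) = (sum_n a n + a (S n))%C.
Proof. exact (@sum_Sn _ a n). Qed.
Lemma sum_OC (a : nat -> CC) : sum_n a 0 = a 0%nat.
Proof. exact (@sum_O _ a). Qed.
Lemma sum_SR (a : nat -> R) n : sum_n a (S n) = sum_n a n + a (S n).
Proof. exact (@sum_Sn _ a n). Qed.
Lemma sum_OR (a : nat -> R) : sum_n a 0 = a 0%nat.
Proof. exact (@sum_O _ a). Qed.

Lemma sum_shiftC (a : nat -> CC) n :
  sum_n a (S n) = (a 0%nat + sum_n (fun k => a (S k)) n)%C.
Proof.
  induction n. { rewrite sum_SC, !sum_OC. reflexivity. }
  rewrite sum_SC, IHn, sum_SC. cring.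
Qed.

Lemma sum_extC (a b : nat -> CC) n :
  (forall k, (k <= n)%nat -> a k = b k) -> sum_n a n = sum_n b n.
Proof. apply sum_n_ext_loc. Qed.

Lemma sum_plusC (a b : nat -> CC) n :
  sum_n (fun k => a k + b k)%C n = (sum_n a n + sum_n b n)%C.
Proof.
  induction n. { rewrite !sum_OC. reflexivity. }
  rewrite !sum_SC, IHn. cring.
Qed.

Lemma sum_multC (c : CC) (a : nat -> CC) n :
  sum_n (fun k => c * a k)%C n = (c * sum_n a n)%C.
Proof.
  induction n. { rewrite !sum_OC. reflexivity. }
  rewrite !sum_SC, IHn. cring.
Qed.

Lemma sum_teleC (b : nat -> CC) n :
  sum_n (fun k => b k - b (S k))%C n = (b 0%nat - b (S n))%C.
Proof.
  induction n. { rewrite !sum_OC. reflexivity. }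
  rewrite !sum_SC, IHn. cring.
Qed.

Lemma Cmod_sum (a : nat -> CC) n :
  Cmod (sum_n a n) <= sum_n (fun k => Cmod (a k)) n.
Proof.
  induction n. { rewrite sum_OC, sum_OR. lra. }
  rewrite sum_SC, sum_SR. eapply Rle_trans. apply Cmod_triangle. lra.
Qed.

Fixpoint bn (n k : nat) : R :=
  match n, k with
  | _, O => 1
  | O, S _ => 0
  | S n', S k' => bn n' k' + bn n' (S k')
  end.

Lemma bn_n0 n : bn n 0 = 1.
Proof. destruct n; reflexivity. Qed.

Lemma bn_big n k : (n < k)%nat -> bn n k = 0.
Proof.
  revert k; induction n; intros k Hk; destruct k; try lia; simpl; auto.
  rewrite !IHn by lia. lra.
Qed.

Lemma bn_C n k : (k <= n)%nat -> bn n k = Binomial.C n k.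
Proof.
  revert k; induction n; intros k Hk.
  - destruct k; [|lia]. simpl. rewrite C_n_0. reflexivity.
  - destruct k. { simpl. rewrite C_n_0. reflexivity. }
    simpl. destruct (Nat.eq_dec k n).
    + subst. rewrite (bn_big n (S n)) by lia. rewrite IHn by lia. rewrite !C_n_n. lra.
    + rewrite !IHn by lia. apply pascal. lia.
Qed.

Lemma bn_fact n k : (k <= n)%nat ->
  bn n k * INR (fact k) * INR (fact (n - k)) = INR (fact n).
Proof.
  intros H. rewrite bn_C by auto. unfold Binomial.C.
  field. split; apply INR_fact_neq_0.
Qed.

Lemma binomC (x y : CC) n :
  sum_n (fun k => RtoC (bn n k) * x ^ k * y ^ (n - k))%C n = ((x + y) ^ n)%C.
Proof.
  induction n.
  - rewrite sum_OC. simpl. cring.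
  - rewrite sum_shiftC.
    assert (E : sum_n (fun k => RtoC (bn (S n) (S k)) * x ^ (S k) * y ^ (S n - S k))%C n
      = (x * sum_n (fun k => RtoC (bn n k) * x ^ k * y ^ (n - k)) n
        + sum_n (fun k => RtoC (bn n (S k)) * x ^ (S k) * y ^ (n - k)) n)%C).
    { rewrite <- sum_multC, <- sum_plusC. apply sum_extC. intros k Hk.
      simpl bn. rewrite RtoC_plus. simpl Nat.sub. simpl Cpow. cring. }
    rewrite E, IHn. clear E.
    assert (E2 : (y * (x + y) ^ n)%C =
       sum_n (fun k => RtoC (bn n k) * x ^ k * y ^ (S n - k))%C (S n)).
    { rewrite <- IHn, <- sum_multC, sum_SC. rewrite bn_big by lia.
      rewrite Cmult_0_l, !Cmult_0_l, Cplus_0_r.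
      apply sum_extC. intros k Hk. replace (S n - k)%nat with (S (n - k)) by lia.
      simpl Cpow. cring. }
    rewrite sum_shiftC in E2. simpl Nat.sub in E2.
    transitivity (x * (x + y) ^ n + y * (x + y) ^ n)%C.
    2:{ simpl Cpow. cring. }
    rewrite E2. simpl bn. simpl Nat.sub. simpl Cpow. rewrite bn_n0. cring.
Qed.

Lemma bn_S_mul n j : bn (S n) (S j) * INR (S j) = INR (S n) * bn n j.
Proof.
  destruct (Compare_dec.le_lt_dec j n) as [H|H].
  - rewrite !bn_C by lia. unfold Binomial.C.
    replace (S n - S j)%nat with (n - j)%nat by lia.
    change (fact (S n)) with (S n * fact n)%nat.
    change (fact (S j)) with (S j * fact j)%nat.
    rewrite !mult_INR. field.
    split; [apply INR_fact_neq_0|]. split; [apply INR_fact_neq_0|].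
    apply not_0_INR; lia.
  - rewrite !bn_big by lia. lra.
Qed.

Lemma binomWC (x y : CC) n :
  sum_n (fun k => RtoC (bn (S n) k * INR k) * x ^ k * y ^ (S n - k))%C (S n)
  = (RtoC (INR (S n)) * x * (x + y) ^ n)%C.
Proof.
  rewrite sum_shiftC. simpl INR at 1. rewrite Rmult_0_r.
  rewrite <- binomC, <- sum_multC.
  rewrite Cmult_0_l, Cmult_0_l, Cplus_0_l.
  apply sum_extC. intros k Hk. rewrite bn_S_mul. simpl Nat.sub. simpl Cpow.
  rewrite RtoC_mult. cring.
Qed.

Definition cf (ka la mu : CC) (k : nat) : CC :=
  (ka * RtoC (INR k) * Ci ^ k + la * Ci ^ k + mu * (- Ci) ^ k)%C.

Lemma eval_cf ka la mu (x y : CC) n :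
  sum_n (fun k => RtoC (bn (S n) k) * cf ka la mu k * x ^ k * y ^ (S n - k))%C (S n)
  = (ka * RtoC (INR (S n)) * (Ci * x) * (Ci * x + y) ^ n
     + la * (Ci * x + y) ^ (S n) + mu * (- Ci * x + y) ^ (S n))%C.
Proof.
  replace (ka * RtoC (INR (S n)) * (Ci * x) * (Ci * x + y) ^ n)%C
    with (ka * (RtoC (INR (S n)) * (Ci * x) * (Ci * x + y) ^ n))%C by cring.
  rewrite <- (binomWC (Ci * x) y n).
  rewrite <- (binomC (Ci * x) y (S n)), <- (binomC (- Ci * x) y (S n)).
  rewrite <- !sum_multC, <- !sum_plusC.
  apply sum_extC. intros k Hk. unfold cf. rewrite !Cpow_mult_l, RtoC_mult. cring.
Qed.

Definition Hn (u : fps) n k : CC :=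
  (RtoC (INR (fact k) * INR (fact (n - k))) * u k (n - k)%nat)%C.

Lemma hom_H u n x y :
  (RtoC (INR (fact n)) * hom u n x y)%C =
  sum_n (fun k => RtoC (bn n k) * Hn u n k * RtoC x ^ k * RtoC y ^ (n - k))%C n.
Proof.
  unfold hom. rewrite <- sum_multC. apply sum_extC. intros k Hk.
  rewrite !pow_n_Cpow. rewrite <- (bn_fact n k Hk). unfold Hn.
  rewrite !RtoC_mult. rewrite (pow_n_Cpow (RtoC y)). cring.
Qed.

Lemma Ci2 : (Ci * Ci = - (1))%C.
Proof. apply injective_projections; simpl; ring. Qed.

Lemma CiSS k : (Ci ^ (S (S k)) = - Ci ^ k)%C.
Proof. simpl Cpow. rewrite Cmult_assoc, Ci2. cring. Qed.

Lemma mCiSS k : ((- Ci) ^ (S (S k)) = - (- Ci) ^ k)%C.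
Proof.
  simpl Cpow. rewrite Cmult_assoc.
  replace (- Ci * - Ci)%C with (Ci * Ci)%C by cring. rewrite Ci2. cring.
Qed.

Lemma cf_rec ka la mu k :
  (cf ka la mu k + cf ka la mu (S (S k)) = - (2) * ka * Ci ^ k)%C.
Proof.
  unfold cf. rewrite CiSS, mCiSS. rewrite !S_INR, !RtoC_plus. cring.
Qed.

Lemma rec_cf (G : nat -> CC) (g : CC) m :
  (forall i, (i <= m)%nat -> (G i + G (S (S i)) = g * Ci ^ i)%C) ->
  forall k, (k <= S (S m))%nat ->
  G k = cf (- g / 2) ((G 0%nat - Ci * G 1%nat + g / 2) / 2)
                     ((G 0%nat + Ci * G 1%nat - g / 2) / 2) k.
Proof.
  intros Hrec.
  set (ka := (- g / 2)%C). set (la := ((G 0%nat - Ci * G 1%nat + g / 2) / 2)%C).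
  set (mu := ((G 0%nat + Ci * G 1%nat - g / 2) / 2)%C).
  assert (H : forall k, (S k <= S (S m))%nat -> G k = cf ka la mu k /\ G (S k) = cf ka la mu (S k)).
  { induction k; intros Hk.
    - split.
      + unfold cf, la, mu. simpl INR. simpl Cpow. field.
      + unfold cf, ka, la, mu. simpl INR. simpl Cpow.
        transitivity (- (Ci * Ci) * G 1%nat)%C. { rewrite Ci2. cring. }
        field.
    - destruct IHk as [H1 H2]; [lia|]. split; [exact H2|].
      assert (E := Hrec k ltac:(lia)).
      assert (E2 := cf_rec ka la mu k).
      rewrite H1 in E.
      apply (f_equal (fun z => z - cf ka la mu k)%C) in E.
      apply (f_equal (fun z => z - cf ka la mu k)%C) in E2.
      replace (G (S (S k))) with (cf ka la mu k + G (S (S k)) - cf ka la mu k)%C by cring.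
      rewrite E. replace (cf ka la mu (S (S k))) with
        (cf ka la mu k + cf ka la mu (S (S k)) - cf ka la mu k)%C by cring.
      rewrite cf_rec. unfold ka. field. }
  intros k Hk. destruct k. apply H; lia. apply H; lia.
Qed.

Lemma u_i0 a f u : goursat_sol a f u -> forall i, u i 0%nat = 0%C.
Proof.
  intros [_ [q Hq]] i. rewrite Hq. unfold mul_yxay.
  destruct i; cbv iota beta; cring.
Qed.

Lemma hom_mul_zero a q n : hom (mul_yxay a q) n a 1 = 0%C.
Proof.
  unfold hom.
  set (b := fun k => (RtoC a ^ k * (match k, (n - k)%nat with
              S i', S j' => q i' j' | _, _ => 0%C end))%C).
  transitivity (sum_n (fun k => b k - b (S k))%C n).
  - apply sum_extC. intros k Hk. rewrite !pow_n_Cpow, Cpow_1_l.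
    unfold mul_yxay, b. cbv beta.
    destruct k as [|k]; cbv iota beta; rewrite ?Nat.sub_succ_r, ?Nat.sub_0_r.
    + destruct n as [|[|d]]; cbv iota beta; simpl Nat.pred; cbv iota beta;
      simpl Cpow; cring.
    + destruct (n - k)%nat as [|[|[|d]]]; cbv iota beta; simpl Nat.pred; cbv iota beta;
      simpl Cpow; cring.
  - rewrite sum_teleC. unfold b. replace (n - S n)%nat with 0%nat by lia.
    cbv iota beta. cring.
Qed.

Definition gm (Rr : R) (m : nat) : CC :=
  (RtoC (/ Rr ^ m * INR (fact m)) * (- Ci) ^ m)%C.

Lemma mCiCi_pow i : ((- Ci) ^ i * Ci ^ i = 1)%C.
Proof.
  rewrite <- Cpow_mult_l.
  replace (- Ci * Ci)%C with (RtoC 1). apply Cpow_1_l.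
  apply injective_projections; simpl; ring.
Qed.

Lemma H_rec a Rr u : Rr <> 0 -> goursat_sol a (fcoef Rr) u ->
  forall m i, (i <= m)%nat ->
  (Hn u (S (S m)) i + Hn u (S (S m)) (S (S i)) = gm Rr m * Ci ^ i)%C.
Proof.
  intros HR [Hf _] m i Hi.
  replace m with (i + (m - i))%nat by lia. set (d := (m - i)%nat). clearbody d.
  assert (E := Hf i d). unfold flap, fcoef in E.
  unfold Hn. replace (S (S (i + d)) - i)%nat with (S (S d)) by lia.
  replace (S (S (i + d)) - S (S i))%nat with d by lia.
  transitivity (RtoC (INR (fact i) * INR (fact d)) *
    (RtoC (INR ((i + 2) * (i + 1))) * u (i + 2)%nat d
     + RtoC (INR ((d + 2) * (d + 1))) * u i (d + 2)%nat))%C.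
  { replace (i + 2)%nat with (S (S i)) by lia. replace (d + 2)%nat with (S (S d)) by lia.
    replace (i + 1)%nat with (S i) by lia. replace (d + 1)%nat with (S d) by lia.
    change (fact (S (S i))) with (S (S i) * (S i * fact i))%nat.
    change (fact (S (S d))) with (S (S d) * (S d * fact d))%nat.
    rewrite !mult_INR, !RtoC_mult. cring. }
  rewrite E. unfold gm.
  assert (R1 : INR (fact i) * INR (fact d) * (/ Rr ^ (i + d) * Binomial.C (i + d) i)
               = / Rr ^ (i + d) * INR (fact (i + d))).
  { unfold Binomial.C. replace (i + d - i)%nat with d by lia. field.
    split; [apply pow_nonzero; auto | split; apply INR_fact_neq_0]. }
  rewrite <- R1. rewrite pow_n_Cpow, Cpow_add_r.
  transitivity (RtoC (INR (fact i) * INR (fact d) * (/ Rr ^ (i + d) * Binomial.C (i + d) i))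
     * (- Ci) ^ d * ((- Ci) ^ i * Ci ^ i))%C.
  2: cring.
  rewrite mCiCi_pow. rewrite !RtoC_mult. cring.
Qed.

Lemma ami_nz a : (RtoC a - Ci)%C <> 0%C.
Proof.
  intros H. apply (f_equal snd) in H. simpl in H. lra.
Qed.

Lemma Q_PA a :
  (- Ci * RtoC a + 1 = - (Ci * RtoC a + 1) * Aof a)%C.
Proof.
  unfold Aof.
  assert (E : ((- Ci * RtoC a + 1) * (RtoC a - Ci) = - (Ci * RtoC a + 1) * (RtoC a + Ci))%C).
  { apply injective_projections; simpl; ring. }
  assert (Hn := ami_nz a).
  transitivity ((- Ci * RtoC a + 1) * (RtoC a - Ci) / (RtoC a - Ci))%C.
  { field. auto. }
  rewrite E. field. auto.
Qed.

Lemma mpow_split (z : CC) N : ((- z) ^ N = (- (1)) ^ N * z ^ N)%C.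
Proof. rewrite <- Cpow_mult_l. f_equal. cring. Qed.

Lemma Cmult_reg_r (x y z : CC) : z <> 0%C -> (x * z = y * z)%C -> x = y.
Proof.
  intros Hz H. transitivity (x * z / z)%C. field; auto.
  rewrite H. field; auto.
Qed.

Lemma mu_rel (ka la mu : CC) (a : R) (n' : nat) (P : CC) : P = (Ci * RtoC a + 1)%C ->
  (ka * RtoC (INR (S n')) * Ci ^ (S n') + la * Ci ^ (S n') + mu * (- Ci) ^ (S n') = 0)%C ->
  (ka * RtoC (INR (S n')) * (Ci * RtoC a) * P ^ n' + la * P ^ (S n')
     + mu * (- Ci * RtoC a + 1) ^ (S n') = 0)%C ->
  la = (- ka * RtoC (INR (S n')) - mu * (- (1)) ^ (S n'))%C /\
  (mu * (- P) ^ (S n') * (Aof a ^ (S n') - 1) = ka * RtoC (INR (S n')) * P ^ n')%C.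
Proof.
  intros HP H1 H2. set (N := S n') in *. set (K := RtoC (INR N)) in *.
  rewrite (mpow_split Ci) in H1.
  assert (HiN : (Ci ^ N)%C <> 0%C) by (apply Cpow_nz; apply Ci_nz).
  assert (HL : la = (- ka * K - mu * (- (1)) ^ N)%C).
  { apply (Cmult_reg_r _ _ (Ci ^ N)); auto.
    apply (f_equal (fun z => z - ka * K * Ci ^ N - mu * ((- (1)) ^ N * Ci ^ N))%C) in H1.
    transitivity (ka * K * Ci ^ N + la * Ci ^ N + mu * ((- (1)) ^ N * Ci ^ N) -
       ka * K * Ci ^ N - mu * ((- (1)) ^ N * Ci ^ N))%C. cring.
    rewrite H1. cring. }
  split; auto.
  rewrite Q_PA in H2. rewrite <- HP in H2. rewrite Cpow_mult_l in H2.
  rewrite HL in H2. rewrite (mpow_split P). rewrite (mpow_split P) in H2.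
  replace (P ^ N)%C with (P * P ^ n')%C in H2 by reflexivity.
  replace (P ^ N)%C with (P * P ^ n')%C by reflexivity.
  apply (f_equal (fun z => ka * K * P ^ n' + z)%C) in H2.
  transitivity (ka * K * P ^ n' + 0)%C. 2: cring.
  rewrite <- H2. rewrite HP. cring.
Qed.


Lemma sin_ge_half th : PI / 6 <= th <= 5 * PI / 6 -> 1 / 2 <= sin th.
Proof.
  intros [H1 H2]. rewrite <- sin_PI6. assert (HP := PI_RGT_0).
  destruct (Rle_dec th (PI / 2)).
  - apply sin_incr_1; lra.
  - rewrite <- (sin_PI_x th). apply sin_incr_1; lra.
Qed.

Lemma INR_Z_to_nat z : (0 <= z)%Z -> INR (Z.to_nat z) = IZR z.
Proof. intros H. rewrite INR_IZR_INZ, Z2Nat.id; auto. Qed.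

Section Nested.
Variable good : nat -> Prop.
Variable pick : nat -> nat.
Hypothesis Hpick : forall K, (K <= pick K)%nat /\ good (pick K).

Definition stepf (p : R * nat) : R * nat :=
  let (l, n) := p in
  let n' := pick (5 * n + 1) in
  ((2 * PI * INR (Z.to_nat (up (INR n' * l / (2 * PI)))) + PI / 6) / INR n', n').

Fixpoint st (k : nat) : R * nat :=
  match k with
  | O => (PI / 6 / INR (pick 1), pick 1)
  | S k => stepf (st k)
  end.

Definition Lw (n : nat) := 2 * PI / 3 / INR n.

Lemma st_inv k :
  (1 <= snd (st k))%nat /\ (k <= snd (st k))%nat /\ good (snd (st k)) /\
  0 <= fst (st k) /\
  exists j : nat, INR (snd (st k)) * fst (st k) = 2 * PI * INR j + PI / 6.
Proof.
  assert (HP := PI_RGT_0).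
  induction k.
  - simpl. destruct (Hpick 1) as [H1 H2]. repeat split; auto; try lia.
    + assert (0 < INR (pick 1)) by (apply lt_0_INR; lia).
      apply Rlt_le, Rdiv_lt_0_compat; lra.
    + exists 0%nat. simpl. field. apply not_0_INR; lia.
  - destruct IHk as (H1 & H2 & H3 & H4 & H5).
    change (st (S k)) with (stepf (st k)). destruct (st k) as [l n]. unfold stepf. cbn [fst snd] in *.
    destruct (Hpick (5 * n + 1)) as [P1 P2].
    set (n' := pick (5 * n + 1)) in *.
    assert (Hn' : 0 < INR n') by (apply lt_0_INR; lia).
    set (y := INR n' * l / (2 * PI)).
    assert (Hy : 0 <= y) by (unfold y; apply Rmult_le_pos; [apply Rmult_le_pos; lra | apply Rlt_le, Rinv_0_lt_compat; lra]).
    destruct (archimed y) as [A1 A2].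
    assert (Hz : (0 <= up y)%Z) by (apply le_IZR; lra).
    split; [lia|]. split; [lia|]. split; [auto|]. split.
    + apply Rmult_le_pos; [|apply Rlt_le, Rinv_0_lt_compat; lra].
      rewrite INR_Z_to_nat by auto. nra.
    + exists (Z.to_nat (up y)). field. lra.
Qed.

Lemma st_step k :
  fst (st k) <= fst (st (S k)) /\
  fst (st (S k)) + Lw (snd (st (S k))) <= fst (st k) + Lw (snd (st k)).
Proof.
  assert (HP := PI_RGT_0).
  destruct (st_inv k) as (H1 & H2 & H3 & H4 & H5).
  change (st (S k)) with (stepf (st k)). destruct (st k) as [l n]. unfold stepf. cbn [fst snd] in *.
  destruct (Hpick (5 * n + 1)) as [P1 P2].
  set (n' := pick (5 * n + 1)) in *.
  assert (Hn' : 0 < INR n') by (apply lt_0_INR; lia).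
  assert (Hn : 1 <= INR n) by (apply (le_INR 1); lia).
  assert (Hnn : 5 * INR n + 1 <= INR n').
  { replace (5 * INR n + 1) with (INR (5 * n + 1)). apply le_INR; lia.
    rewrite plus_INR, mult_INR. simpl. lra. }
  set (y := INR n' * l / (2 * PI)).
  assert (Hy : 0 <= y) by (unfold y; apply Rmult_le_pos; [apply Rmult_le_pos; lra | apply Rlt_le, Rinv_0_lt_compat; lra]).
  destruct (archimed y) as [A1 A2].
  assert (Hz : (0 <= up y)%Z) by (apply le_IZR; lra).
  rewrite INR_Z_to_nat by auto. unfold Lw.
  assert (Ey : 2 * PI * y = INR n' * l) by (unfold y; field; lra).
  split.
  - apply (Rmult_le_reg_l (INR n')); auto.
    replace (INR n' * ((2 * PI * IZR (up y) + PI / 6) / INR n')) with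
      (2 * PI * IZR (up y) + PI / 6) by (field; lra). nra.
  - apply (Rmult_le_reg_l (INR n')); auto.
    replace (INR n' * ((2 * PI * IZR (up y) + PI / 6) / INR n' + 2 * PI / 3 / INR n'))
      with (2 * PI * IZR (up y) + 5 * PI / 6) by (field; lra).
    replace (INR n' * (l + 2 * PI / 3 / INR n)) with
      (INR n' * l + 2 * PI / 3 * (INR n' / INR n)) by (field; lra).
    assert (5 <= INR n' / INR n).
    { apply (Rmult_le_reg_r (INR n)); [lra|]. unfold Rdiv. rewrite Rmult_assoc, Rinv_l; lra. }
    nra.
Qed.

Lemma st_mono k j : (k <= j)%nat ->
  fst (st k) <= fst (st j) /\
  fst (st j) + Lw (snd (st j)) <= fst (st k) + Lw (snd (st k)).
Proof.
  induction 1. lra.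
  destruct (st_step m). lra.
Qed.

Lemma nested_phi : exists phi, forall k,
  fst (st k) <= phi <= fst (st k) + Lw (snd (st k)).
Proof.
  set (E := fun x => exists k, x = fst (st k)).
  assert (Hb : bound E).
  { exists (fst (st 0) + Lw (snd (st 0))). intros x [k ->].
    destruct (st_mono 0 k ltac:(lia)) as [_ H].
    assert (0 < Lw (snd (st k))).
    { unfold Lw. destruct (st_inv k) as (H1 & _). assert (HP := PI_RGT_0).
      assert (0 < INR (snd (st k))) by (apply lt_0_INR; lia).
      apply Rdiv_lt_0_compat; lra. }
    lra. }
  destruct (completeness E Hb) as [phi [Hu Hl]].
  { exists (fst (st 0)). exists 0%nat. auto. }
  exists phi. intros k. split.
  - apply Hu. exists k; auto.
  - apply Hl. intros x [j ->].
    destruct (Nat.le_ge_cases k j) as [Hkj|Hkj].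
    + destruct (st_mono k j Hkj) as [_ H].
      assert (0 < Lw (snd (st j))).
      { unfold Lw. destruct (st_inv j) as (H1 & _). assert (HP := PI_RGT_0).
        assert (0 < INR (snd (st j))) by (apply lt_0_INR; lia).
        apply Rdiv_lt_0_compat; lra. }
      lra.
    + destruct (st_mono j k Hkj) as [H _].
      assert (0 < Lw (snd (st k))).
      { unfold Lw. destruct (st_inv k) as (H1 & _). assert (HP := PI_RGT_0).
        assert (0 < INR (snd (st k))) by (apply lt_0_INR; lia).
        apply Rdiv_lt_0_compat; lra. }
      lra.
Qed.

End Nested.

Lemma nested (good : nat -> Prop) :
  (forall K, exists N, (K <= N)%nat /\ good N) ->
  exists phi, forall K, exists N, (K <= N)%nat /\ good N /\ 1 / 2 <= sin (INR N * phi).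
Proof.
  intros Hg.
  assert (Hc : forall K, {N | (K <= N)%nat /\ good N}).
  { intros K. apply constructive_indefinite_description. auto. }
  set (pick := fun K => proj1_sig (Hc K)).
  assert (Hpick : forall K, (K <= pick K)%nat /\ good (pick K)).
  { intros K. unfold pick. apply (proj2_sig (Hc K)). }
  destruct (nested_phi good pick Hpick) as [phi Hphi].
  exists phi. intros K. exists (snd (st pick K)).
  destruct (st_inv good pick Hpick K) as (H1 & H2 & H3 & H4 & [j Hj]).
  repeat split; auto.
  destruct (Hphi K) as [P1 P2]. unfold Lw in P2.
  set (l := fst (st pick K)) in *. set (n := snd (st pick K)) in *.
  assert (HP := PI_RGT_0).
  assert (Hn : 0 < INR n) by (apply lt_0_INR; lia).
  replace (INR n * phi) with ((INR n * phi - 2 * INR j * PI) + 2 * INR j * PI) by ring.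
  rewrite sin_period. apply sin_ge_half.
  assert (INR n * l <= INR n * phi) by (apply Rmult_le_compat_l; lra).
  assert (INR n * phi <= INR n * l + 2 * PI / 3).
  { replace (INR n * l + 2 * PI / 3) with (INR n * (l + 2 * PI / 3 / INR n)) by (field; lra).
    apply Rmult_le_compat_l; lra. }
  lra.
Qed.



Lemma key a Rr u m : Rr <> 0 -> goursat_sol a (fcoef Rr) u ->
  exists la mu : CC,
  (forall k, (k <= S (S m))%nat -> Hn u (S (S m)) k = cf (- gm Rr m / 2) la mu k) /\
  la = (- (- gm Rr m / 2) * RtoC (INR (S (S m))) - mu * (- (1)) ^ (S (S m)))%C /\
  (mu * (- (Ci * RtoC a + 1)) ^ (S (S m)) * (Aof a ^ (S (S m)) - 1)
     = (- gm Rr m / 2) * RtoC (INR (S (S m))) * (Ci * RtoC a + 1) ^ (S m))%C.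
Proof.
  intros HR Hg.
  assert (Hrec := H_rec a Rr u HR Hg m).
  set (G := Hn u (S (S m))) in *.
  pose proof (rec_cf G (gm Rr m) m Hrec) as Hcf.
  set (la := ((G 0%nat - Ci * G 1%nat + gm Rr m / 2) / 2)%C) in *.
  set (mu := ((G 0%nat + Ci * G 1%nat - gm Rr m / 2) / 2)%C) in *.
  exists la, mu. split; [exact Hcf|].
  apply (mu_rel _ _ _ a (S m) (Ci * RtoC a + 1)%C eq_refl).
  - change (cf (- gm Rr m / 2) la mu (S (S m)) = 0%C).
    rewrite <- Hcf by lia. unfold G, Hn. rewrite Nat.sub_diag.
    rewrite (u_i0 _ _ _ Hg). cring.
  - destruct Hg as [_ [q Hq]].
    assert (Hz : hom u (S (S m)) a 1 = 0%C).
    { transitivity (hom (mul_yxay a q) (S (S m)) a 1).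
      - unfold hom. apply sum_extC. intros k _. rewrite Hq. reflexivity.
      - apply hom_mul_zero. }
    assert (E := hom_H u (S (S m)) a 1). rewrite Hz, Cmult_0_r in E.
    rewrite (sum_extC _ (fun k => RtoC (bn (S (S m)) k) * cf (- gm Rr m / 2) la mu k
         * RtoC a ^ k * RtoC 1 ^ (S (S m) - k))%C) in E.
    2:{ intros k Hk. fold G. rewrite Hcf by lia. reflexivity. }
    rewrite eval_cf in E. rewrite E. reflexivity.
Qed.

Lemma eval_real ka la mu (x y : R) n' :
  la = (- ka * RtoC (INR (S n')) - mu * (- (1)) ^ (S n'))%C ->
  sum_n (fun k => RtoC (bn (S n') k) * cf ka la mu k * RtoC x ^ k * RtoC y ^ (S n' - k))%C (S n')
  = (- ka * RtoC (INR (S n')) * RtoC y * (Ci * RtoC x + RtoC y) ^ n'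
     + mu * ((- Ci * RtoC x + RtoC y) ^ (S n') - (- (Ci * RtoC x + RtoC y)) ^ (S n')))%C.
Proof.
  intros H. rewrite eval_cf. rewrite H. rewrite (mpow_split (Ci * RtoC x + RtoC y)).
  change ((Ci * RtoC x + RtoC y) ^ S n')%C with ((Ci * RtoC x + RtoC y) * (Ci * RtoC x + RtoC y) ^ n')%C.
  cring.
Qed.

Lemma deMoivre phi n : Cpow ((cos phi, sin phi) : CC) n = ((cos (INR n * phi), sin (INR n * phi)) : CC).
Proof.
  induction n.
  - simpl. rewrite Rmult_0_l, cos_0, sin_0. reflexivity.
  - change ((cos phi, sin phi) ^ S n)%C with ((cos phi, sin phi) * (cos phi, sin phi) ^ n)%C.
    rewrite IHn. rewrite S_INR.
    replace ((INR n + 1) * phi) with (phi + INR n * phi) by ring.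
    rewrite cos_plus, sin_plus. apply injective_projections; simpl; ring.
Qed.

Lemma W2 t phi N :
  ((- Ci * RtoC (t * cos phi) + RtoC (t * sin phi)) ^ N
   - (- (Ci * RtoC (t * cos phi) + RtoC (t * sin phi))) ^ N
   = (- Ci) ^ N * RtoC t ^ N * (@pair R R 0 (2 * sin (INR N * phi))%R))%C.
Proof.
  assert (E1 : (- Ci * RtoC (t * cos phi) + RtoC (t * sin phi)
               = - Ci * (RtoC t * (cos phi, sin phi)))%C).
  { apply injective_projections; simpl; ring. }
  assert (E2 : (- (Ci * RtoC (t * cos phi) + RtoC (t * sin phi))
               = - Ci * (RtoC t * (cos (- phi), sin (- phi))))%C).
  { rewrite cos_neg, sin_neg. apply injective_projections; simpl; ring. }
  rewrite E1, E2, !Cpow_mult_l, !deMoivre.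
  replace (INR N * - phi) with (- (INR N * phi)) by ring.
  rewrite cos_neg, sin_neg.
  transitivity ((- Ci) ^ N * RtoC t ^ N *
     (@pair R R (cos (INR N * phi)) (sin (INR N * phi)) - @pair R R (cos (INR N * phi)) (- sin (INR N * phi))%R))%C.
  cring. f_equal. apply injective_projections; simpl; ring.
Qed.

Lemma W1 t phi : 0 <= t ->
  Cmod (Ci * RtoC (t * cos phi) + RtoC (t * sin phi)) = t.
Proof.
  intros Ht. unfold Cmod.
  replace (fst (Ci * RtoC (t * cos phi) + RtoC (t * sin phi))%C ^ 2 +
           snd (Ci * RtoC (t * cos phi) + RtoC (t * sin phi))%C ^ 2) with (t ^ 2).
  - apply sqrt_pow2; auto.
  - simpl. assert (H := sin2_cos2 phi). unfold Rsqr in H.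
    transitivity (t * t * (sin phi * sin phi + cos phi * cos phi)).
    rewrite H; ring. ring.
Qed.

Lemma Cmod_0b b : Cmod ((0, b) : CC) = Rabs b.
Proof.
  unfold Cmod. simpl. replace (0 * (0 * 1) + b * (b * 1)) with (b²).
  apply sqrt_Rsqr_abs. unfold Rsqr; ring.
Qed.

Lemma Cmod_mCi_pow N : Cmod ((- Ci) ^ N) = 1.
Proof. rewrite Cmod_pow, Cmod_opp, Cmod_Ci, pow1. reflexivity. Qed.

Lemma Cmod_RtoC_pow t N : 0 <= t -> Cmod (RtoC t ^ N) = t ^ N.
Proof. intros H. rewrite Cmod_pow, Cmod_R, Rabs_pos_eq; auto. Qed.

Lemma pow_le_one c n : 0 <= c <= 1 -> c ^ n <= 1.
Proof. intros H. rewrite <- (pow1 n). apply pow_incr. lra. Qed.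

Lemma INR_le_2pow n : INR n <= 2 ^ n.
Proof.
  induction n. simpl; lra. rewrite S_INR. simpl.
  assert (1 <= 2 ^ n) by (rewrite <- (pow1 n); apply pow_incr; lra). lra.
Qed.

Lemma Cmod_ka Rr m : 0 < Rr ->
  Cmod (- gm Rr m / 2)%C = / Rr ^ m * INR (fact m) / 2.
Proof.
  intros HR. assert (H2 : RtoC 2 <> 0%C).
  { intros H. apply (f_equal fst) in H. simpl in H. lra. }
  unfold Cdiv. rewrite Cmod_mult, Cmod_opp, Cmod_inv by auto.
  unfold gm. rewrite Cmod_mult, Cmod_mCi_pow, !Cmod_R.
  rewrite (Rabs_pos_eq 2) by lra. rewrite Rabs_pos_eq. field.
  apply pow_nonzero; lra.
  apply Rmult_le_pos. apply Rlt_le, Rinv_0_lt_compat, pow_lt; auto. apply pos_INR.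
Qed.

Lemma lower a Rr u m t phi : 0 < Rr -> 0 < t -> goursat_sol a (fcoef Rr) u ->
  let p := Cmod (Ci * RtoC a + 1)%C in
  let D := Cmod (Aof a ^ (S (S m)) - 1)%C in
  0 < D -> 0 < p -> 2 * p * D <= 1 -> 4 * p * D * Rr ^ m * INR (S (S m)) <= t ^ (S (S m)) ->
  1 / 2 <= sin (INR (S (S m)) * phi) ->
  1 <= Cmod (hom u (S (S m)) (t * cos phi) (t * sin phi)).
Proof.
  intros HR Ht Hg p D HD Hp H1 H2 Hsin.
  destruct (key a Rr u m (Rgt_not_eq _ _ HR) Hg) as [la [mu [Hcf [HL Hmu]]]].
  set (N := S (S m)) in *. set (ka := (- gm Rr m / 2)%C) in *.
  assert (E := hom_H u N (t * cos phi) (t * sin phi)).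
  rewrite (sum_extC _ (fun k => RtoC (bn N k) * cf ka la mu k
         * RtoC (t * cos phi) ^ k * RtoC (t * sin phi) ^ (N - k))%C) in E.
  2:{ intros k Hk. rewrite Hcf by lia. reflexivity. }
  unfold N in E. rewrite (eval_real ka la mu _ _ (S m) HL) in E. rewrite W2 in E. fold N in E.
  set (K := Cmod ka). set (M := Cmod mu).
  assert (HK : K = / Rr ^ m * INR (fact m) / 2) by (apply Cmod_ka; auto).
  assert (HM : M * p * D = K * INR N).
  { apply (f_equal Cmod) in Hmu. rewrite !Cmod_mult, Cmod_pow, Cmod_opp, Cmod_pow, Cmod_R in Hmu.
    fold p D K M in Hmu. rewrite Rabs_pos_eq in Hmu by apply pos_INR.
    change (p ^ N) with (p * p ^ S m) in Hmu.
    assert (0 < p ^ S m) by (apply pow_lt; auto).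
    apply (Rmult_eq_reg_r (p ^ S m)); [|lra]. rewrite <- Hmu. ring. }
  assert (HM0 : 0 <= M) by apply Cmod_ge_0.
  assert (Hfact : INR (fact N) = INR N * INR (S m) * INR (fact m)).
  { unfold N. change (fact (S (S m))) with (S (S m) * (S m * fact m))%nat.
    rewrite !mult_INR. ring. }
  assert (HfN : 0 < INR (fact N)) by (apply INR_fact_lt_0).
  assert (HV : INR (fact N) * Cmod (hom u N (t * cos phi) (t * sin phi)) >=
     M * t ^ N - K * INR N * t ^ N).
  { rewrite <- (Rabs_pos_eq (INR (fact N))) by lra. rewrite <- Cmod_R, <- Cmod_mult, E.
    set (X := (- ka * RtoC (INR N) * RtoC (t * sin phi) *
                 (Ci * RtoC (t * cos phi) + RtoC (t * sin phi)) ^ S m)%C).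
    set (Y := (mu * ((- Ci) ^ N * RtoC t ^ N * @pair R R 0 (2 * sin (INR N * phi))%R))%C).
    assert (HY : Cmod Y >= M * t ^ N).
    { unfold Y. rewrite !Cmod_mult, Cmod_mCi_pow, Cmod_RtoC_pow, Cmod_0b by lra.
      rewrite Rabs_pos_eq by lra. fold M.
      assert (0 <= t ^ N) by (apply pow_le; lra).
      assert (0 <= M * t ^ N) by (apply Rmult_le_pos; auto).
      assert (0 <= 2 * sin (INR N * phi) - 1) by lra. nra. }
    assert (HX : Cmod X <= K * INR N * t ^ N).
    { unfold X. rewrite !Cmod_mult, Cmod_opp, Cmod_pow, W1, !Cmod_R by lra. fold K.
      rewrite (Rabs_pos_eq (INR _)) by apply pos_INR. fold N.
      assert (Rabs (t * sin phi) <= t).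
      { rewrite Rabs_mult, Rabs_pos_eq by lra. assert (H := SIN_bound phi).
        assert (Rabs (sin phi) <= 1) by (apply Rabs_le; lra). nra. }
      assert (0 <= K) by apply Cmod_ge_0.
      assert (0 <= INR N) by apply pos_INR.
      assert (0 <= t ^ S m) by (apply pow_le; lra).
      change (t ^ N) with (t * t ^ S m).
      assert (K * INR N * Rabs (t * sin phi) <= K * INR N * t) by (apply Rmult_le_compat_l; nra).
      nra. }
    assert (T := Cmod_triangle (X + Y) (- X)).
    replace (X + Y + - X)%C with Y in T by cring. rewrite Cmod_opp in T. lra. }
  assert (Hpos : 0 <= t ^ N) by (apply pow_le; lra).
  assert (HA : M * t ^ N >= 2 * INR (fact m) * INR N * INR N).
  { assert (M * (4 * p * D * Rr ^ m * INR N) <= M * t ^ N) by (apply Rmult_le_compat_l; auto).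
    assert (M * (4 * p * D * Rr ^ m * INR N) = 2 * INR (fact m) * INR N * INR N).
    { replace (M * (4 * p * D * Rr ^ m * INR N)) with (4 * (M * p * D) * Rr ^ m * INR N) by ring.
      rewrite HM, HK. field. apply pow_nonzero; lra. }
    lra. }
  assert (HB : K * INR N * t ^ N <= M * t ^ N / 2).
  { rewrite <- HM. assert (0 <= M * t ^ N) by (apply Rmult_le_pos; auto). nra. }
  assert (HC : INR (fact N) <= INR (fact N) * Cmod (hom u N (t * cos phi) (t * sin phi))).
  { rewrite Hfact.
    assert (INR (S m) <= INR N) by (apply le_INR; unfold N; lia).
    assert (0 <= INR (fact m)) by apply pos_INR.
    assert (0 <= INR N) by apply pos_INR.
    assert (INR N * INR (S m) * INR (fact m) <= INR (fact m) * INR N * INR N).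
    { replace (INR (fact m) * INR N * INR N) with (INR N * INR N * INR (fact m)) by ring.
      apply Rmult_le_compat_r; auto. apply Rmult_le_compat_l; auto. }
    rewrite <- Hfact. lra. }
  apply (Rmult_le_reg_l (INR (fact N))); lra.
Qed.

Lemma good_from_small (p Rr t d : R) m :
  1 <= p -> 0 < Rr -> 0 < t <= Rr -> 0 <= d ->
  d <= ((t / Rr) * (Rmin 1 (Rr ^ 2) / (8 * p) / 2)) ^ (S (S m)) ->
  2 * p * d <= 1 /\ 4 * p * d * Rr ^ m * INR (S (S m)) <= t ^ (S (S m)).
Proof.
  intros Hp HR Ht Hd Hs.
  set (N := S (S m)) in *.
  set (c := Rmin 1 (Rr ^ 2) / (8 * p)) in *.
  assert (Hc0 : 0 < c).
  { unfold c. apply Rdiv_lt_0_compat; [|lra]. apply Rmin_glb_lt; [lra|]. apply pow_lt; lra. }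
  assert (Hc1 : 8 * p * c <= 1).
  { unfold c. replace (8 * p * (Rmin 1 (Rr ^ 2) / (8 * p))) with (Rmin 1 (Rr ^ 2)) by (field; lra).
    apply Rmin_l. }
  assert (Hc2 : 8 * p * c <= Rr ^ 2).
  { unfold c. replace (8 * p * (Rmin 1 (Rr ^ 2) / (8 * p))) with (Rmin 1 (Rr ^ 2)) by (field; lra).
    apply Rmin_r. }
  assert (Hcle : c <= 1) by nra.
  rewrite Rpow_mult_distr in Hs.
  assert (Hr : (t / Rr) ^ N = t ^ N / (Rr ^ m * Rr ^ 2)).
  { unfold Rdiv. rewrite Rpow_mult_distr, pow_inv. unfold N.
    replace (S (S m)) with (m + 2)%nat by lia. rewrite !pow_add. reflexivity. }
  assert (Hr1 : (t / Rr) ^ N <= 1).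
  { apply pow_le_one. split. apply Rlt_le, Rdiv_lt_0_compat; lra.
    apply (Rmult_le_reg_r Rr); auto. unfold Rdiv. rewrite Rmult_assoc, Rinv_l; lra. }
  assert (Hr0 : 0 <= (t / Rr) ^ N) by (apply pow_le; apply Rlt_le, Rdiv_lt_0_compat; lra).
  assert (Hc2N : (c / 2) ^ N = c ^ N * (/ 2) ^ N) by (unfold Rdiv; apply Rpow_mult_distr).
  assert (HcN : c ^ N <= c).
  { unfold N. simpl. assert (c * (c * c ^ m) <= c * 1).
    { apply Rmult_le_compat_l; [lra|]. rewrite <- (Rmult_1_l 1).
      apply Rmult_le_compat; try lra. apply pow_le; lra. apply pow_le_one; lra. }
    lra. }
  assert (Hh : (/ 2) ^ N * INR N <= 1).
  { rewrite pow_inv. assert (H := INR_le_2pow N). assert (0 < 2 ^ N) by (apply pow_lt; lra).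
    apply (Rmult_le_reg_l (2 ^ N)); auto. rewrite <- Rmult_assoc, Rinv_r; lra. }
  assert (Hh0 : 0 <= (/ 2) ^ N) by (apply pow_le; lra).
  assert (Hh1 : (/ 2) ^ N <= 1) by (apply pow_le_one; lra).
  assert (HcN0 : 0 <= c ^ N) by (apply pow_le; lra).
  split.
  - (* d <= (c/2)^N <= c *)
    assert (d <= c) .
    { rewrite Hc2N in Hs.
      assert ((t / Rr) ^ N * (c ^ N * (/ 2) ^ N) <= 1 * (c * 1)).
      { apply Rmult_le_compat; try lra. apply Rmult_le_pos; lra.
        apply Rmult_le_compat; lra. }
      lra. }
    nra.
  - rewrite Hc2N, Hr in Hs.
    assert (HRm : 0 < Rr ^ m) by (apply pow_lt; lra).
    assert (HR2 : 0 < Rr ^ 2) by (apply pow_lt; lra).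
    assert (HtN : 0 <= t ^ N) by (apply pow_le; lra).
    assert (HN : 0 <= INR N) by apply pos_INR.
    assert (E : 4 * p * d * Rr ^ m * INR N <=
                4 * p * (t ^ N / (Rr ^ m * Rr ^ 2) * (c ^ N * (/ 2) ^ N)) * Rr ^ m * INR N).
    { repeat apply Rmult_le_compat_r; try lra. apply Rmult_le_compat_l; lra. }
    replace (4 * p * (t ^ N / (Rr ^ m * Rr ^ 2) * (c ^ N * (/ 2) ^ N)) * Rr ^ m * INR N)
      with (4 * p * t ^ N / Rr ^ 2 * c ^ N * ((/ 2) ^ N * INR N)) in E by (field; lra).
    assert (E2 : 4 * p * t ^ N / Rr ^ 2 * c ^ N * ((/ 2) ^ N * INR N) <= 4 * p * t ^ N / Rr ^ 2 * c * 1).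
    { assert (0 <= 4 * p * t ^ N / Rr ^ 2).
      { apply Rmult_le_pos; [nra|]. apply Rlt_le, Rinv_0_lt_compat; lra. }
      apply Rmult_le_compat; try lra.
      apply Rmult_le_pos; lra. apply Rmult_le_pos; lra. apply Rmult_le_compat_l; lra. }
    assert (E3 : 4 * p * t ^ N / Rr ^ 2 * c * 1 <= t ^ N / 2).
    { replace (4 * p * t ^ N / Rr ^ 2 * c * 1) with (t ^ N * (8 * p * c) / (2 * Rr ^ 2)) by (field; lra).
      apply (Rmult_le_reg_r (2 * Rr ^ 2)); [lra|].
      replace (t ^ N * (8 * p * c) / (2 * Rr ^ 2) * (2 * Rr ^ 2)) with (t ^ N * (8 * p * c)) by (field; lra).
      replace (t ^ N / 2 * (2 * Rr ^ 2)) with (t ^ N * Rr ^ 2) by field.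
      apply Rmult_le_compat_l; lra. }
    lra.
Qed.

Lemma part3 (a Rr : R)
  (hA : ~ root_of_unity (Aof a))
  (hlim : LimInf_seq (fun m => Rpower (Cmod (pow_n (Aof a) m - RtoC 1)%C) (/ INR m))
          = Finite 0)
  (hR : 0 < Rr) :
  forall u : fps, goursat_sol a (fcoef Rr) u -> ~ converges_near0 u.
Proof.
  intros u Hg [eps [Heps Hconv]].
  set (t := Rmin eps Rr / 2).
  assert (Hmin : 0 < Rmin eps Rr) by (apply Rmin_glb_lt; lra).
  assert (Ht0 : 0 < t) by (unfold t; lra).
  assert (Hte : t < eps) by (unfold t; assert (Rmin eps Rr <= eps) by apply Rmin_l; lra).
  assert (HtR : t <= Rr) by (unfold t; assert (Rmin eps Rr <= Rr) by apply Rmin_r; lra).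
  set (p := Cmod (Ci * RtoC a + 1)%C).
  assert (Hp1 : 1 <= p).
  { unfold p. eapply Rle_trans; [|apply re_le_Cmod]. simpl. rewrite Rabs_pos_eq; lra. }
  set (D := fun N => Cmod (Aof a ^ N - 1)%C).
  assert (HD : forall N, (0 < N)%nat -> 0 < D N).
  { intros N HN. unfold D. apply Cmod_gt_0. intros H. apply hA. exists N. split; auto.
    rewrite pow_n_Cpow. apply (f_equal (fun z => z + 1)%C) in H.
    transitivity ((Aof a ^ N - 1) + 1)%C. cring. rewrite H. cring. }
  set (c := Rmin 1 (Rr ^ 2) / (8 * p)).
  assert (Hc0 : 0 < c).
  { unfold c. apply Rdiv_lt_0_compat; [|lra]. apply Rmin_glb_lt; [lra|]. apply pow_lt; lra. }
  set (delta := (t / Rr) * (c / 2)).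
  assert (Hdelta : 0 < delta).
  { unfold delta. apply Rmult_lt_0_compat. apply Rdiv_lt_0_compat; lra. lra. }
  set (good := fun N => exists m, N = S (S m) /\ 2 * p * D N <= 1 /\
                 4 * p * D N * Rr ^ m * INR N <= t ^ N).
  assert (Hinf : forall K, exists N, (K <= N)%nat /\ good N).
  { intros K.
    set (f := fun m => Rpower (Cmod (pow_n (Aof a) m - RtoC 1)%C) (/ INR m)) in hlim.
    destruct (ex_LimInf_seq f) as [l Hl].
    rewrite (is_LimInf_seq_unique _ _ Hl) in hlim. subst l.
    destruct (Hl (mkposreal delta Hdelta)) as [Hl1 _].
    destruct (Hl1 (Nat.max K 2)) as [n [Hn Hfn]]. simpl in Hfn.
    exists n. split; [lia|].
    destruct n as [|[|m]]; try lia.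
    exists m. split; auto.
    assert (Hd : 0 < D (S (S m))) by (apply HD; lia).
    set (r := f (S (S m))) in Hfn.
    assert (Hr0 : 0 < r) by (unfold r, f, Rpower; apply exp_pos).
    assert (Hrn : r ^ S (S m) = D (S (S m))).
    { rewrite <- Rpower_pow by auto. unfold r, f. rewrite Rpower_mult.
      rewrite Rinv_l by (apply not_0_INR; lia). rewrite pow_n_Cpow. apply Rpower_1.
      exact Hd. }
    assert (Hle : D (S (S m)) <= delta ^ S (S m)).
    { rewrite <- Hrn. apply pow_incr. lra. }
    apply (good_from_small p Rr t (D (S (S m))) m Hp1 hR ltac:(lra) ltac:(lra)).
    unfold delta, c in Hle. exact Hle. }
  destruct (nested good Hinf) as [phi Hphi].
  set (x := t * cos phi). set (y := t * sin phi).
  assert (Hxy : x ^ 2 + y ^ 2 < eps ^ 2).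
  { unfold x, y. assert (H := sin2_cos2 phi). unfold Rsqr in H.
    replace ((t * cos phi) ^ 2 + (t * sin phi) ^ 2) with (t ^ 2 * (sin phi * sin phi + cos phi * cos phi)) by ring.
    rewrite H, Rmult_1_r. simpl; nra. }
  assert (Hs := Hconv x y Hxy).
  apply (@Cauchy_ex_series C_AbsRing C_CompleteNormedModule) in Hs.
  destruct (Hs (mkposreal 1 Rlt_0_1)) as [N0 HN0].
  destruct (Hphi N0) as [N [HN [[m [-> [G1 G2]]] Hsin]]].
  assert (Hlt := HN0 _ _ HN HN).
  rewrite sum_n_n in Hlt. change (Cmod (hom u (S (S m)) x y) < 1) in Hlt.
  assert (1 <= Cmod (hom u (S (S m)) x y)).
  { apply (lower a Rr u m t phi hR Ht0 Hg).
    - exact (HD (S (S m)) ltac:(lia)).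
    - apply Rlt_le_trans with 1; [lra| exact Hp1].
    - exact G1.
    - exact G2.
    - exact Hsin. }
  lra.
Qed.



Lemma RtoC_nz r : r <> 0 -> RtoC r <> 0%C.
Proof. intros H E. apply (f_equal fst) in E. simpl in E. lra. Qed.

Lemma P_nz a : (Ci * RtoC a + 1)%C <> 0%C.
Proof. intros E. apply (f_equal fst) in E. simpl in E. lra. Qed.

Definition mu0 a Rr m : CC :=
  ((- gm Rr m / 2) * RtoC (INR (S (S m))) * (Ci * RtoC a + 1) ^ (S m)
   / ((- (Ci * RtoC a + 1)) ^ (S (S m)) * (Aof a ^ (S (S m)) - 1)))%C.

Definition la0 a Rr m : CC :=
  (- (- gm Rr m / 2) * RtoC (INR (S (S m))) - mu0 a Rr m * (- (1)) ^ (S (S m)))%C.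

Definition u0 a Rr : fps := fun i j =>
  match (i + j)%nat with
  | O => 0%C
  | S O => 0%C
  | S (S m) => (cf (- gm Rr m / 2) (la0 a Rr m) (mu0 a Rr m) i
                / RtoC (INR (fact i) * INR (fact j)))%C
  end.

Lemma fact_nzC k : RtoC (INR (fact k)) <> 0%C.
Proof. apply RtoC_nz, INR_fact_neq_0. Qed.

Lemma u0_flap a Rr : Rr <> 0 -> forall i j, flap (u0 a Rr) i j = fcoef Rr i j.
Proof.
  intros HR i j. unfold flap, u0.
  replace (i + 2 + j)%nat with (S (S (i + j))) by lia.
  replace (i + (j + 2))%nat with (S (S (i + j))) by lia.
  set (ka := (- gm Rr (i + j) / 2)%C).
  set (la := la0 a Rr (i + j)). set (mu := mu0 a Rr (i + j)).
  replace (i + 2)%nat with (S (S i)) by lia. replace (j + 2)%nat with (S (S j)) by lia.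
  replace (i + 1)%nat with (S i) by lia. replace (j + 1)%nat with (S j) by lia.
  change (fact (S (S i))) with (S (S i) * (S i * fact i))%nat.
  change (fact (S (S j))) with (S (S j) * (S j * fact j))%nat.
  assert (Hi := fact_nzC i). assert (Hj := fact_nzC j).
  assert (Hi1 : RtoC (INR (S i)) <> 0%C) by (apply RtoC_nz, not_0_INR; lia).
  assert (Hi2 : RtoC (INR (S (S i))) <> 0%C) by (apply RtoC_nz, not_0_INR; lia).
  assert (Hj1 : RtoC (INR (S j)) <> 0%C) by (apply RtoC_nz, not_0_INR; lia).
  assert (Hj2 : RtoC (INR (S (S j))) <> 0%C) by (apply RtoC_nz, not_0_INR; lia).
  rewrite !mult_INR, !RtoC_mult.
  transitivity ((cf ka la mu i + cf ka la mu (S (S i))) / (RtoC (INR (fact i)) * RtoC (INR (fact j))))%C.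
  { field. repeat split; auto. }
  rewrite cf_rec. unfold ka, fcoef, gm.
  change (pow_n (- Ci)%C j) with ((- Ci) ^ j)%C.
  assert (R1 : / Rr ^ (i + j) * Binomial.C (i + j) i
               = / Rr ^ (i + j) * INR (fact (i + j)) / (INR (fact i) * INR (fact j))).
  { unfold Binomial.C. replace (i + j - i)%nat with j by lia. unfold Rdiv; ring. }
  rewrite R1. rewrite Cpow_add_r.
  transitivity (RtoC (/ Rr ^ (i + j) * INR (fact (i + j))) * (- Ci) ^ j * ((- Ci) ^ i * Ci ^ i)
     / (RtoC (INR (fact i)) * RtoC (INR (fact j))))%C.
  { field. split; auto. }
  rewrite mCiCi_pow.
  assert (Hnz : INR (fact i) * INR (fact j) <> 0).
  { intros E. apply Rmult_integral in E. destruct E as [E|E]; apply (INR_fact_neq_0 _ E). }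
  rewrite (RtoC_div _ _ Hnz). rewrite (RtoC_mult (INR (fact i)) (INR (fact j))).
  field. auto.
Qed.

Lemma u0_i0 a Rr : forall i, u0 a Rr i 0%nat = 0%C.
Proof.
  intros i. unfold u0. rewrite Nat.add_0_r. destruct i as [|[|m]]; auto.
  assert (E : cf (- gm Rr m / 2) (la0 a Rr m) (mu0 a Rr m) (S (S m)) = 0%C).
  { unfold cf, la0. rewrite (mpow_split Ci). cring. }
  rewrite E. unfold Cdiv. cring.
Qed.

Lemma AN1_nz a N : ~ root_of_unity (Aof a) -> (0 < N)%nat -> (Aof a ^ N - 1)%C <> 0%C.
Proof.
  intros hA HN E. apply hA. exists N. split; auto. rewrite pow_n_Cpow.
  transitivity ((Aof a ^ N - 1) + 1)%C. cring. rewrite E. cring.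
Qed.

Lemma u0_col a Rr : ~ root_of_unity (Aof a) -> forall m, hom (u0 a Rr) (S (S m)) a 1 = 0%C.
Proof.
  intros hA m. set (N := S (S m)).
  assert (E := hom_H (u0 a Rr) N a 1).
  set (ka := (- gm Rr m / 2)%C) in *. set (M := mu0 a Rr m).
  rewrite (sum_extC _ (fun k => RtoC (bn N k) * cf ka (la0 a Rr m) M k
         * RtoC a ^ k * RtoC 1 ^ (N - k))%C) in E.
  2:{ intros k Hk. unfold Hn, u0. replace (k + (N - k))%nat with N by lia. unfold N.
      assert (Hi := fact_nzC k). assert (Hj := fact_nzC (S (S m) - k)).
      rewrite RtoC_mult. fold ka M. field. split; auto. }
  unfold N in E. rewrite eval_cf in E.
  set (P := (Ci * RtoC a + 1)%C) in *.
  assert (HP := P_nz a). fold P in HP.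
  assert (HA := AN1_nz a (S (S m)) hA ltac:(lia)).
  assert (Hs : ((- (1)) ^ (S (S m)))%C <> 0%C).
  { apply Cpow_nz. intros H. apply (f_equal fst) in H. simpl in H. lra. }
  assert (HPP : (P * P ^ S m)%C <> 0%C) by (apply Cmult_neq_0; auto; apply Cpow_nz; auto).
  assert (HM : (M * ((- (1)) ^ (S (S m)) * (P * P ^ S m)) * (Aof a ^ S (S m) - 1)
                = ka * RtoC (INR (S (S m))) * P ^ S m)%C).
  { unfold M, mu0. fold ka P. rewrite (mpow_split P).
    change (P ^ S (S m))%C with (P * P ^ S m)%C. field. repeat split; [exact HA | apply Cpow_nz; auto | auto | auto]. }
  assert (Z : (RtoC (INR (fact (S (S m)))) * hom (u0 a Rr) (S (S m)) a 1)%C = 0%C).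
  { rewrite E. rewrite Q_PA. fold P. rewrite Cpow_mult_l, (mpow_split P).
    unfold la0. fold ka M.
    change (P ^ S (S m))%C with (P * P ^ S m)%C.
    transitivity (ka * RtoC (INR (S (S m))) * P ^ S m * (Ci * RtoC a - P)
      + M * ((- (1)) ^ (S (S m)) * (P * P ^ S m)) * (Aof a ^ S (S m) - 1))%C.
    cring. rewrite HM. unfold P. cring. }
  assert (Hf := fact_nzC (S (S m))).
  change (@eq CC (hom (u0 a Rr) (S (S m)) a 1) 0%C).
  transitivity (/ RtoC (INR (fact (S (S m)))) * (RtoC (INR (fact (S (S m)))) * hom (u0 a Rr) (S (S m)) a 1))%C.
  field; auto. rewrite Z. cring.
Qed.

Fixpoint qq (a : R) (u : fps) (k m : nat) {struct m} : CC :=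
  match m with
  | O => u (S k) 1%nat
  | S m' => (u (S k) (S (S m')) + RtoC a * qq a u (S k) m')%C
  end.

Lemma qq_sum a u m : forall k,
  qq a u k m = sum_n (fun l => RtoC a ^ l * u (S k + l)%nat (S m - l)%nat)%C m.
Proof.
  induction m; intros k.
  - rewrite sum_OC. rewrite Nat.add_0_r. simpl. cring.
  - cbn [qq]. rewrite IHm. rewrite sum_shiftC. rewrite Nat.add_0_r.
    rewrite <- sum_multC. simpl Nat.sub at 2.
    replace (RtoC a ^ 0)%C with (RtoC 1) by reflexivity.
    f_equal. cring. apply sum_extC. intros l Hl.
    replace (S k + S l)%nat with (S (S k) + l)%nat by lia. simpl Nat.sub. simpl Cpow. cring.
Qed.

Lemma col_split u m a :
  hom u (S (S m)) a 1 = (u 0%nat (S (S m)) + RtoC a * qq a u 0 m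
                         + RtoC a ^ (S (S m)) * u (S (S m)) 0%nat)%C.
Proof.
  rewrite qq_sum. unfold hom. rewrite sum_shiftC, sum_SC. rewrite <- sum_multC.
  rewrite (sum_extC _ (fun l => RtoC a * (RtoC a ^ l * u (S 0 + l)%nat (S m - l)%nat))%C m).
  2:{ intros k Hk. rewrite !pow_n_Cpow, Cpow_1_l. simpl Nat.sub. simpl Nat.add. simpl Cpow. cring. }
  rewrite Nat.sub_diag. rewrite !pow_n_Cpow, !Cpow_1_l.
  replace (S (S m) - 0)%nat with (S (S m)) by lia. rewrite (pow_n_Cpow (RtoC a) (S (S m))). simpl Cpow at 1. cring.
Qed.

Lemma part2 a Rr : Rr <> 0 -> ~ root_of_unity (Aof a) ->
  goursat_sol a (fcoef Rr) (u0 a Rr).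
Proof.
  intros HR hA. split.
  - intros i j. apply u0_flap; auto.
  - exists (qq a (u0 a Rr)). intros i j. unfold mul_yxay.
    destruct j as [|[|j']].
    + rewrite u0_i0. destruct i; cbv iota beta; cring.
    + destruct i; cbv iota beta.
      * unfold u0. simpl Nat.add. cbv iota beta. cring.
      * cbn [qq]. cring.
    + destruct i; cbv iota beta.
      * assert (E := col_split (u0 a Rr) j' a). rewrite u0_col in E by auto.
        rewrite u0_i0 in E.
        apply (f_equal (fun z => z - RtoC a * qq a (u0 a Rr) 0 j')%C) in E.
        transitivity (u0 a Rr 0%nat (S (S j')) + RtoC a * qq a (u0 a Rr) 0 j' + RtoC a ^ S (S j') * 0 - RtoC a * qq a (u0 a Rr) 0 j')%C.
        cring. rewrite <- E. cring.
      * cbn [qq]. cring.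
Qed.

Lemma hom_fcoef Rr m x y : Rr <> 0 ->
  hom (fcoef Rr) m x y = (RtoC (/ Rr ^ m) * (RtoC x + (- Ci) * RtoC y) ^ m)%C.
Proof.
  intros HR. unfold hom. rewrite <- binomC, <- sum_multC. apply sum_extC. intros i Hi.
  unfold fcoef. replace (i + (m - i))%nat with m by lia. rewrite (bn_C m i Hi).
  rewrite (pow_n_Cpow (- Ci)%C (m - i)), (pow_n_Cpow (RtoC x) i), (pow_n_Cpow (RtoC y) (m - i)).
  rewrite RtoC_mult, Cpow_mult_l. cring.
Qed.

Lemma part1 Rr : 0 < Rr -> hom_series_unif_on_ball Rr (fcoef Rr).
Proof.
  intros HR r [Hr0 HrR]. exists (fun m => (r / Rr) ^ m). split.
  - apply ex_series_geom. rewrite Rabs_pos_eq by (left; apply Rdiv_lt_0_compat; lra).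
    apply (Rmult_lt_reg_r Rr); auto. unfold Rdiv. rewrite Rmult_assoc, Rinv_l; lra.
  - intros m x y Hxy. rewrite hom_fcoef by lra. rewrite Cmod_mult, Cmod_R, Cmod_pow.
    assert (Hs : Cmod (RtoC x + - Ci * RtoC y) <= r).
    { unfold Cmod. rewrite <- (sqrt_pow2 r) by lra. apply sqrt_le_1_alt. simpl.
      replace ((x + (- 0 * y - - (1) * 0)) * ((x + (- 0 * y - - (1) * 0)) * 1) +
               (0 + (- 0 * 0 + - (1) * y)) * ((0 + (- 0 * 0 + - (1) * y)) * 1))
        with (x ^ 2 + y ^ 2) by ring.
      simpl in Hxy. lra. }
    assert (H0 := Cmod_ge_0 (RtoC x + - Ci * RtoC y)).
    rewrite Rabs_pos_eq by (apply Rlt_le, Rinv_0_lt_compat, pow_lt; lra).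
    unfold Rdiv. rewrite Rpow_mult_distr, pow_inv.
    rewrite Rmult_comm. apply Rmult_le_compat_r.
    apply Rlt_le, Rinv_0_lt_compat, pow_lt; lra.
    apply pow_incr; lra.
Qed.

Theorem mainTheorem10 (a Rr : R) (ha : 0 <= a)
  (hA : ~ root_of_unity (Aof a))
  (hlim : LimInf_seq (fun m => Rpower (Cmod (pow_n (Aof a) m - RtoC 1)%C) (/ INR m))
          = Finite 0)
  (hR : 0 < Rr) :
  hom_series_unif_on_ball Rr (fcoef Rr) /\
  (exists u : fps, goursat_sol a (fcoef Rr) u) /\
  (forall u : fps, goursat_sol a (fcoef Rr) u -> ~ converges_near0 u).
Proof.
  split; [apply part1; auto|]. split.
  - exists (u0 a Rr). apply part2; auto. lra.
  - apply part3; auto.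
Qed.
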